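(* Let $(W,S)$ be a chordal Coxeter system with a set $\mathcal B$ of bad irreducible simplices. Then $S$ has a bad separator if and only if there is a bad maximal irreducible simplex $A=\{a,b,c\}$ of $(W,S)$ with $m(a,b)=2$ and an element $d\in S-(A\cup A^\perp)$ such that $\{a,b,d\}$ is a simplex of $(W,S)$.
   Context: Coxeter system $(W,S)$: $W=\langle S\mid (st)^{m(s,t)}\ (m(s,t)<\infty)\rangle$, $m(s,s)=1$, $m(s,t)=m(t,s)\in\{2,\dots,\infty\}$. $\Gamma(W,S)$: graph on $S$ with edge $\{s,t\}$ iff $s\ne t$, $m(s,t)<\infty$; chordal: every cycle of length $\ge4$ has a chord. A simplex is $A\subseteq S$ with all $m(s,t)<\infty$; $A$ is irreducible if the graph on $A$ with edges $m(s,t)\ge3$ is connected; maximal irreducible simplex: not properly contained in another irreducible simplex. $A^\perp=\{s\in S: m(s,x)=2\ \forall x\in A\}$. Types ${\bf G}_3,{\bf G}_4$: Coxeter diagram a path with labels $3,5$ resp. $3,3,5$. A set of bad edges is a set $\mathcal B_2$ of pairs $\{a,b\}\subseteq S$ with $5\le m(a,b)<\infty$ such that every irreducible simplex properly containing $\{a,b\}$ has type ${\bf G}_3$ or ${\bf G}_4$; an irreducible simplex is bad if it contains a pair in $\mathcal B_2$; the set $\mathcal B$ of all bad irreducible simplices is a set of bad irreducible simplices. For $c,f\in S$, $B\subseteq S$ is a $(c,f)$-separator if $c,f\notin B$ lie in different connected components of $\Gamma(W,S)-B$; minimal if no proper subset is one. A bad separator of $S$ is a subset $B\subseteq S$ for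 which there are $a,b\in B$ with $m(a,b)=2$ and $c\in S-B$ such that $A=\{a,b,c\}$ is a bad maximal irreducible simplex, $B\subseteq\{a,b\}\cup A^\perp$, and some $f\in S-B$ such that $B$ is a minimal $(c,f)$-separator of $S$. *)

(* Defs.v *)
(* A Coxeter system (W,S) is given by its Coxeter matrix
   m : S -> S -> nat on a finite type S of generators, with the convention
   m s t = 0 encoding m(s,t) = infinity. *)
From mathcomp Require Import all_boot.

Set Implicit Arguments. Unset Strict Implicit. Unset Printing Implicit Defensive.

Section Coxeter.
Variables (S : finType) (m : S -> S -> nat).

Definition coxeter_matrix : Prop :=
  (forall s, m s s = 1) /\ (forall s t, m s t = m t s) /\
  (forall s t, s != t -> m s t != 1).

Definition finm (s t : S) : bool := m s t != 0.

Definition gadj : rel S := fun s t => (s != t) && finm s t.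

Definition chordal : Prop :=
  forall p : seq S, uniq p -> 4 <= size p -> cycle gadj p ->
    exists x, exists y, [/\ x \in p, y \in p, gadj x y,
                          y != next p x & x != next p y].

Definition simplex (A : {set S}) : bool :=
  [forall s in A, forall t in A, finm s t].

Definition irreducible (A : {set S}) : bool :=
  (A != set0) &&
  [forall x in A, forall y in A,
     connect (fun u v => [&& u \in A, v \in A & 3 <= m u v]) x y].

Definition irr_simplex (A : {set S}) : bool := simplex A && irreducible A.

Definition max_irr_simplex (A : {set S}) : bool :=
  irr_simplex A && [forall B : {set S}, irr_simplex B ==> ~~ (A \proper B)].

Definition perp (A : {set S}) : {set S} :=
  [set s | [forall x in A, m s x == 2]].

Definition type_G3 (A : {set S}) : Prop :=
  exists x y z, [/\ A = [set x; y; z], m x y = 3, m y z = 5 & m x z = 2].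

Definition type_G4 (A : {set S}) : Prop :=
  exists w x y z, A = [set w; x; y; z] /\
    [/\ m w x = 3, m x y = 3 & m y z = 5] /\
    [/\ m w y = 2, m w z = 2 & m x z = 2].

Definition bad_edges (B2 : {set {set S}}) : Prop :=
  forall e, e \in B2 ->
    exists a b, [/\ e = [set a; b], a != b, 5 <= m a b, finm a b &
      forall A, irr_simplex A -> e \proper A -> type_G3 A \/ type_G4 A].

Definition bad_simplex (B2 : {set {set S}}) (A : {set S}) : bool :=
  irr_simplex A && [exists e in B2, e \subset A].

Definition separator (B : {set S}) (c f : S) : bool :=
  [&& c \notin B, f \notin B &
      ~~ connect (fun u v => [&& gadj u v, u \notin B & v \notin B]) c f].

Definition min_separator (B : {set S}) (c f : S) : bool :=
  separator B c f && [forall B' : {set S}, (B' \proper B) ==> ~~ separator B' c f].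

Definition bad_separator (B2 : {set {set S}}) (B : {set S}) : Prop :=
  exists a b c f, [/\ a \in B, b \in B, m a b = 2 & c \notin B] /\
    [/\ bad_simplex B2 [set a; b; c] && max_irr_simplex [set a; b; c],
     B \subset [set a; b] :|: perp [set a; b; c],
     f \notin B & min_separator B c f].

End Coxeter.

(* Main.v *)
Require Import Defs.
From mathcomp Require Import all_boot zify.
Set Implicit Arguments. Unset Strict Implicit. Unset Printing Implicit Defensive.

Lemma next_adj (T : eqType) (c1 c3 : seq T) x y :
  uniq (c1 ++ x :: y :: c3) -> next (c1 ++ x :: y :: c3) x = y.
Proof.
move=> U; rewrite next_nth mem_cat inE eqxx orbT.
have xc1 : x \notin c1.
  by move: U; rewrite cat_uniq => /and3P[_ /hasPn /(_ x) + _]; rewrite inE eqxx /= => /(_ isT).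
case: c1 U xc1 => [|h c1] U xc1 /=; first by rewrite eqxx.
have -> : (h == x) = false.
  by apply/negbTE; move: U => /= /andP[+ _]; apply: contra => /eqP ->; rewrite mem_cat inE eqxx orbT.
move: xc1; rewrite inE negb_or => /andP[_ xc1].
by rewrite index_cat (negbTE xc1) /= eqxx addn0 nth_cat ltnNge leqnSn subSnn.
Qed.

Lemma next_last (T : eqType) (c2 : seq T) x y :
  uniq (x :: c2 ++ [:: y]) -> next (x :: c2 ++ [:: y]) y = x.
Proof.
move=> U; rewrite next_nth; have -> : y \in x :: c2 ++ [:: y] by rewrite !(inE, mem_cat) eqxx !orbT.
move: U => /= /andP[xn]; rewrite cat_uniq /= andbT orbF => /andP[_ yn].
have -> : (x == y) = false.
  by apply/negbTE; apply: contra xn => /eqP ->; rewrite mem_cat inE eqxx orbT.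
by rewrite index_cat (negbTE yn) /= eqxx addn0 nth_default // size_cat /= addn1.
Qed.

Lemma gadj_sym (S : finType) (m : S -> S -> nat) :
  (forall s t, m s t = m t s) -> symmetric (gadj m).
Proof. by move=> ms x y; rewrite /gadj /finm ms eq_sym. Qed.

Lemma split_ex (T : eqType) (p : seq T) x : x \in p -> exists p1 p2, p = p1 ++ x :: p2.
Proof. by case/splitPr=> p1 p2; exists p1, p2. Qed.

Lemma tri (S : finType) (m : S -> S -> nat) :
  (forall s t, m s t = m t s) -> chordal m ->
  forall n u s, size s <= n -> uniq (u :: s) -> 2 <= size s -> cycle (gadj m) (u :: s) ->
  exists2 w, w \in s & [/\ w != last u s, gadj m u w & gadj m (last u s) w].
Proof.
move=> ms ch; elim=> [|n IH] u s; first by case: s.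
move=> Hs U Hs2 Hc.
case: (ltnP 2 (size s)) => Hs3; last first.
  case: s Hs Hs2 Hs3 U Hc => [|w [|v [|? ?]]] //= _ _ _.
  rewrite !inE negb_or => /andP[/andP[_ _] /andP[wv _]] /and3P[uw wv' _].
  exists w; first by rewrite inE eqxx.
  by split=> //; rewrite gadj_sym.
have key : forall x y c1 c2 c3, u :: s = c1 ++ x :: c2 ++ y :: c3 -> gadj m x y ->
    y != next (u :: s) x -> x != next (u :: s) y ->
    exists2 w, w \in s & [/\ w != last u s, gadj m u w & gadj m (last u s) w].
  move=> x y c1 c2 c3 E gxy nx ny.
  have c2n : c2 != [::].
    apply/negP=> /eqP c2e; move: nx U; rewrite E c2e cat0s => + U'.
    by rewrite next_adj ?eqxx.
  have c13 : (c1 != [::]) || (c3 != [::]).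
    case: c1 E => [|h1 c1'] E //; case: c3 E => [|h3 c3'] E //.
    move: ny U; rewrite E cat0s => + U'.
    by rewrite next_last ?eqxx.
  set c' := c1 ++ x :: y :: c3.
  have sub : subseq c' (u :: s).
    rewrite E /c'; apply: cat_subseq => //=; rewrite eqxx.
    exact: suffix_subseq.
  have [s' Ec'] : exists s', c' = u :: s'.
    rewrite /c'; case Ec1: c1 => [|h c1']; rewrite Ec1 /= in E; case: E => [-> _].
      by exists (y :: c3).
    by exists (c1' ++ x :: y :: c3).
  have lastE : last u s = last u s'.
    by rewrite -(last_cons u u s) -(last_cons u u s') -Ec' E /c' !last_cat /= last_cat.
  have [w ws' [wl guw glw]] : exists2 w, w \in s' & [/\ w != last u s', gadj m u w & gadj m (last u s') w].
    apply: (IH u s').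
    - have := congr1 size E; have := congr1 size Ec'; rewrite /c' /= !size_cat /= !size_cat /=.
      have : 0 < size c2 by move: c2n; case: (c2).
      move: Hs => /=; lia.
    - by rewrite -Ec'; apply: subseq_uniq sub U.
    - have := congr1 size Ec'; rewrite /c' /= !size_cat /=.
      have : 0 < size c1 + size c3 by move: c13; case: (c1) => [|? ?]; case: (c3).
      move=> h1; rewrite !addnS => -[h2]. by rewrite -h2 ltnS.
    - move: Hc; rewrite -Ec' /c' E !(cycle_path x) !last_cat /= !cat_path /=.
    by rewrite last_cat /= cat_path /= gxy => /and3P[-> -> /andP[_ /andP[_ ->]]].
  exists w; last by rewrite lastE.
  have : w \in u :: s by rewrite (mem_subseq sub) // Ec' inE ws' orbT.
  rewrite inE => /orP[/eqP wu|//].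
  by move: (subseq_uniq sub U); rewrite Ec' /= -wu ws'.
have [x [y [xin yin gxy nx ny]]] :
   exists x y, [/\ x \in u :: s, y \in u :: s, gadj m x y,
                 y != next (u :: s) x & x != next (u :: s) y].
  have := ch (u :: s) U; rewrite /= ltnS => /(_ Hs3 Hc) [x [y [? ? ? ? ?]]].
  by exists x, y.
have xy : x != y by apply: contraTneq gxy => ->; rewrite /gadj eqxx.
have [c1 [r E1]] := split_ex xin.
move: yin; rewrite E1 mem_cat inE [y == x]eq_sym (negbTE xy) /= => /orP[yc1|yr].
  have [c1a [c1b E2]] := split_ex yc1.
  apply: (key y x c1a c1b r) => //; last by rewrite gadj_sym.
  by rewrite E1 E2 -catA.
have [c2 [c3 E2]] := split_ex yr.
by apply: (key x y c1 c2 c3) => //; rewrite E1 E2.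
Qed.

Lemma helly (S : finType) (m : S -> S -> nat) :
  (forall s t, m s t = m t s) -> chordal m ->
  forall (K : seq S) n (p : seq S) x, size p <= n -> uniq (x :: p) -> path (gadj m) x p ->
  (forall k, k \in K -> k \notin x :: p) ->
  (forall k1 k2, k1 \in K -> k2 \in K -> k1 != k2 -> gadj m k1 k2) ->
  all (fun k => has (gadj m k) (x :: p)) K ->
  exists2 w, w \in x :: p & all (fun k => gadj m k w) K.
Proof.
move=> ms ch K; elim=> [|n IH] p x Hs U Hp Kn Kc Ha.
  case: p Hs U Hp Kn Ha => // _ _ _ _ Ha; exists x; first by rewrite inE.
  by apply/allP=> k /(allP Ha) /=; rewrite orbF.
case: p Hs U Hp Kn Ha => [|y q] Hs U Hp Kn Ha.
  exists x; first by rewrite inE.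
  by apply/allP=> k /(allP Ha) /=; rewrite orbF.
case: (boolP (all (fun k => has (gadj m k) (y :: q)) K)) => HA.
  have Kn' : forall k, k \in K -> k \notin y :: q.
    by move=> k /Kn; rewrite inE negb_or => /andP[].
  have [w wi wa] := IH q y Hs (proj2 (andP U)) (proj2 (andP Hp)) Kn' Kc HA.
  by exists w => //; rewrite inE wi orbT.
have [k1 k1K k1n] := allPn HA.
have gk1x : gadj m k1 x by move: (allP Ha k1 k1K) => /= /orP[|/(negP k1n)].
have pn : y :: q != [::] by [].
move: (y :: q) pn Hs U Hp Kn Ha k1n => p0 pn Hs U Hp Kn Ha k1n.
case/lastP: p0 pn Hs U Hp Kn Ha k1n => [//|p' z] _ Hs U Hp Kn Ha k1n.
case: (boolP (all (fun k => has (gadj m k) (x :: p')) K)) => HB.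
  have Hs' : size p' <= n by move: Hs; rewrite size_rcons ltnS.
  have U' : uniq (x :: p') by move: U; rewrite -rcons_cons rcons_uniq => /andP[].
  have Hp' : path (gadj m) x p' by move: Hp; rewrite rcons_path => /andP[].
  have Kn' : forall k, k \in K -> k \notin x :: p'.
    by move=> k /Kn; apply: contra; rewrite -rcons_cons mem_rcons inE => ->; rewrite orbT.
  have [w wi wa] := IH p' x Hs' U' Hp' Kn' Kc HB.
  by exists w => //; rewrite -rcons_cons mem_rcons inE wi orbT.
have [k2 k2K k2n] := allPn HB.
have gk2z : gadj m k2 z.
  move: (allP Ha k2 k2K); rewrite -rcons_cons has_rcons => /orP[//|/(negP k2n)] [].
have k12 : k1 != k2.
  by apply: contraTneq gk1x => ->; apply: contra k2n => h; rewrite /= h.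
set s := rcons (x :: rcons p' z) k2.
have [w wi [wl g1 g2]] : exists2 w, w \in s &
    [/\ w != last k1 s, gadj m k1 w & gadj m (last k1 s) w].
  apply: (tri ms ch (leqnn _)).
  - rewrite /= /s rcons_uniq mem_rcons !inE negb_or k12 /=.
    have := Kn _ k1K; have := Kn _ k2K; rewrite !inE !negb_or => /andP[k2x k2p] /andP[k1x k1p].
    move: U => /= /andP[xn Up].
    by rewrite k1x k1p k2p Up /= mem_rcons inE negb_or eq_sym k2x xn.
  - by rewrite /s /= !size_rcons.
  - rewrite (cycle_path k1) /s /= last_rcons rcons_path Hp last_rcons (gadj_sym ms z) gk2z gk1x andbT.
    by rewrite (gadj_sym ms) Kc.
move: wl g2; rewrite /s last_rcons => wl g2.
move: wi; rewrite mem_rcons inE (negbTE wl) /= => wi.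
have wx : w = x.
  move: wi; rewrite inE => /orP[/eqP //|wp].
  by move: k1n => /hasPn /(_ w wp); rewrite g1.
have wz : w = z.
  move: wi; rewrite -rcons_cons mem_rcons inE => /orP[/eqP //|wp].
  by move: k2n => /hasPn /(_ w wp); rewrite g2.
by move: U; rewrite /= mem_rcons inE -wx -wz eqxx.
Qed.

Lemma conn_notin (S : finType) (m : S -> S -> nat) (B : {set S}) u w :
  connect (fun u v => [&& gadj m u v, u \notin B & v \notin B]) u w -> u \notin B -> w \notin B.
Proof.
move/connectP=> [p Hp ->]; elim: p u Hp => //= v p IH u /andP[/and3P[_ _ vB] Hp] _.
exact: IH.
Qed.

Lemma eB_sym (S : finType) (m : S -> S -> nat) (B : {set S}) :
  (forall s t, m s t = m t s) ->
  symmetric (fun u v => [&& gadj m u v, u \notin B & v \notin B]).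
Proof. by move=> ms u v; rewrite (gadj_sym ms); case: (u \notin B); case: (v \notin B); rewrite /= ?andbF. Qed.

Lemma nbr (S : finType) (m : S -> S -> nat) (B : {set S}) a c f :
  a \in B -> c \notin B -> f \notin B ->
  connect (fun u v => [&& gadj m u v, u \notin B :\ a & v \notin B :\ a]) c f ->
  ~~ connect (fun u v => [&& gadj m u v, u \notin B & v \notin B]) c f ->
  exists2 x, x \notin B &
    gadj m a x && connect (fun u v => [&& gadj m u v, u \notin B & v \notin B]) x f.
Proof.
move=> aB cB fB /connectP[p Hp Hl] nc.
suff : (c \notin B /\ connect (fun u v => [&& gadj m u v, u \notin B & v \notin B]) c f) \/
   exists2 x, x \notin B &
    gadj m a x && connect (fun u v => [&& gadj m u v, u \notin B & v \notin B]) x f.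
  by case=> // -[_ h]; rewrite h in nc.
elim: p c {cB} Hp Hl {nc} => [|y p IH] z /=.
  by move=> _ <-; left; split; [exact: fB|exact: connect0].
move=> /andP[/and3P[gzy zn yn] Hp] Hl.
case: (IH y Hp Hl) => [[yB yc]|]; last by right.
case: (boolP (z \in B)) => zB.
  have za : z = a by move: zn; rewrite !inE negb_and negbK zB orbF => /eqP.
  by right; exists y => //; rewrite -za gzy yc.
left; split => //; apply: connect_trans yc; apply: connect1.
by rewrite gzy zB yB.
Qed.

Lemma minsep (S : finType) (m : S -> S -> nat) c f :
  forall n (B : {set S}), #|B| <= n -> separator m B c f ->
  exists2 B' : {set S}, B' \subset B & min_separator m B' c f.
Proof.
elim=> [|n IH] B Hn Hs;
  (case: (boolP [forall B' : {set S}, (B' \proper B) ==> ~~ separator m B' c f]) => H;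
   [by exists B; [exact: subxx | rewrite /min_separator Hs H] |
    move/forallPn: H => [B']; rewrite negb_imply negbK => /andP[pB sB']]).
  by have := proper_card pB; rewrite ltnNge (leq_trans Hn).
have [B'' sub ms] := IH B' (leq_trans (proper_card pB) Hn) sB'.
by exists B'' => //; apply: subset_trans sub (proper_sub pB).
Qed.

Lemma irr_small (S : finType) (m : S -> S -> nat) (X : {set S}) :
  (forall u v, u \in X -> v \in X -> m u v < 3) -> irreducible m X ->
  forall x y, x \in X -> y \in X -> x = y.
Proof.
move=> Hs /andP[_ /forallP H] x y xX yX.
move: (H x); rewrite xX /= => /forallP /(_ y); rewrite yX /= => /connectP[[|v p] /= Hp ->] //.
by move: Hp => /andP[/and3P[_ vX]]; rewrite leqNgt Hs.
Qed.

Lemma maxF (S : finType) (m : S -> S -> nat) (A : {set S}) s :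
  (forall x y, m x y = m y x) -> (forall x, m x x = 1) -> (forall x y, x != y -> m x y != 1) ->
  max_irr_simplex m A -> s \notin A -> (forall x, x \in A -> finm m s x) ->
  s \notin perp m A -> False.
Proof.
move=> ms m1 mn1 /andP[/andP[sA iA] /forallP mx] sn fs sp.
have [z zA mz] : exists2 z, z \in A & 3 <= m s z.
  move: sp; rewrite inE negb_forall => /existsP[z]; rewrite negb_imply => /andP[zA mz].
  exists z => //.
  have sz : s != z by apply: contraNneq sn => ->.
  move: (fs z zA) (mn1 _ _ sz); rewrite /finm.
  by case: (m s z) mz => [|[|[|k]]].
have Hpr : A \proper s |: A by apply: properUr; rewrite sub1set.
suff Hirr : irr_simplex m (s |: A) by move: (mx (s |: A)); rewrite Hirr Hpr.
rewrite /irr_simplex; apply/andP; split.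
    apply/forallP=> x; apply/implyP=> /setU1P xin; apply/forallP=> y; apply/implyP=> /setU1P yin.
    case: xin yin => [-> | xA] [-> | yA].
    - by rewrite /finm m1.
    - exact: fs.
    - by rewrite /finm ms; exact: fs.
    - by move: sA => /forallP /(_ x); rewrite xA /= => /forallP /(_ y); rewrite yA.
  apply/andP; split; first by apply/set0Pn; exists s; exact: setU11.
  set r' := (fun u v : S => [&& u \in s |: A, v \in s |: A & 3 <= m u v]).
  have lift : forall x y, x \in A -> y \in A -> connect r' x y.
    move=> x y xA yA; move: iA => /andP[_ /forallP /(_ x)]; rewrite xA /= => /forallP /(_ y).
    rewrite yA /=; apply: connect_sub => u v /and3P[uA vA muv]; apply: connect1.
    by rewrite /r' !setU1r.
  have toz : forall x, x \in s |: A -> connect r' x z.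
    move=> x /setU1P[->|xA]; last exact: lift.
    by apply: connect1; rewrite /r' setU11 setU1r.
  have fromz : forall y, y \in s |: A -> connect r' z y.
    move=> y /setU1P[->|yA]; last exact: lift.
    by apply: connect1; rewrite /r' setU11 setU1r // ms.
  apply/forallP=> x; apply/implyP=> xin; apply/forallP=> y; apply/implyP=> yin.
  exact: connect_trans (toz x xin) (fromz y yin).
Qed.

Lemma simp_fin (S : finType) (m : S -> S -> nat) (X : {set S}) x y :
  simplex m X -> x \in X -> y \in X -> finm m x y.
Proof. by move=> /forallP /(_ x) + xX => /implyP /(_ xX) /forallP /(_ y) /implyP H /H. Qed.

Lemma simp3 (S : finType) (m : S -> S -> nat) a b d :
  (forall x y, m x y = m y x) -> (forall x, m x x = 1) ->
  finm m a b -> finm m a d -> finm m b d -> simplex m [set a; b; d].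
Proof.
move=> ms m1 ab ad bd.
have fs : forall x y, finm m x y = finm m y x by move=> x y; rewrite /finm ms.
have fr : forall x, finm m x x by move=> x; rewrite /finm m1.
apply/forallP=> x; apply/implyP; rewrite !inE => /orP[/orP[]|] /eqP ->;
apply/forallP=> y; apply/implyP; rewrite !inE => /orP[/orP[]|] /eqP ->;
  by rewrite ?fr // fs.
Qed.

Lemma gadj_fin (S : finType) (m : S -> S -> nat) x y : gadj m x y -> finm m x y.
Proof. by case/andP. Qed.

Lemma fwd (S : finType) (m : S -> S -> nat) (B : {set S}) a b c f :
  coxeter_matrix m -> chordal m ->
  a \in B -> b \in B -> m a b = 2 -> c \notin B -> f \notin B ->
  min_separator m B c f ->
  exists2 d, d \notin [set a; b; c] :|: perp m [set a; b; c] & simplex m [set a; b; d].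
Proof.
move=> [m1 [ms mn1]] ch aB bB mab cB fB /andP[sep /forallP mins].
set e := (fun u v : S => [&& gadj m u v, u \notin B & v \notin B]).
have nc : ~~ connect e c f by move: sep => /and3P[].
have getn : forall a', a' \in B -> exists2 x, x \notin B & gadj m a' x && connect e x f.
  move=> a' a'B; apply: (nbr a'B cB fB) => //.
  have cB' : c \notin B :\ a' by rewrite inE negb_and cB orbT.
  have fB' : f \notin B :\ a' by rewrite inE negb_and fB orbT.
  by have := mins (B :\ a'); rewrite properD1 //= /separator cB' fB' /= negbK.
have [x xB /andP[gax cxf]] := getn a aB.
have [y yB /andP[gby cyf]] := getn b bB.
have esym : connect_sym e by apply: sym_connect_sym; exact: eB_sym.
have cxy : connect e x y by apply: connect_trans cxf _; rewrite esym.
move/connectP: cxy => [p0 Hp0 Hl0].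
case: (shortenP Hp0) Hl0 => p Hp Up _ Hl.
have ab : a != b by apply/eqP=> ab; move: mab; rewrite ab m1.
have inC : forall w, w \in x :: p -> (w \notin B) && connect e w f.
  move=> w win; have cw := path_connect Hp win.
  rewrite (conn_notin cw xB) /=; apply: connect_trans cxf; by rewrite esym.
have Hpg : path (gadj m) x p by apply: sub_path Hp => u v /andP[].
have Kn : forall k, k \in [:: a; b] -> k \notin x :: p.
  move=> k; rewrite !inE => /orP[]/eqP -> ; apply/negP => /inC /andP[];
    by rewrite ?aB ?bB.
have Kc : forall k1 k2, k1 \in [:: a; b] -> k2 \in [:: a; b] -> k1 != k2 -> gadj m k1 k2.
  move=> k1 k2; rewrite !inE => /orP[]/eqP -> /orP[]/eqP ->; rewrite ?eqxx //= => _.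
  - by rewrite /gadj ab /finm mab.
  - by rewrite /gadj eq_sym ab /finm ms mab.
have Ha : all (fun k => has (gadj m k) (x :: p)) [:: a; b].
  have yin : y \in x :: p by rewrite Hl mem_last.
  have Hb : has (gadj m b) (x :: p) by apply/hasP; exists y.
  by apply/allP => k; rewrite !inE => /orP[]/eqP -> //=; rewrite gax.
have [w win wa] := helly ms ch (leqnn (size p)) Up Hpg Kn Kc Ha.
move: wa => /= /and3P[gaw gbw _].
have /andP[wB cwf] := inC w win.
exists w; last first.
  by apply: simp3 => //; [rewrite /finm mab | exact: gadj_fin gaw | exact: gadj_fin gbw].
have wc : w != c by apply: contraNneq nc => <-.
rewrite in_setU !inE negb_or; apply/andP; split.
  rewrite !negb_or wc andbT; apply/andP; split; apply: contraNneq wB => ->; by [].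
apply/negP=> /forallP /(_ c); rewrite !inE eqxx orbT /= => /eqP mwc.
  move: nc; rewrite esym => /negP; apply.
  apply: (@connect_trans _ _ w); first by rewrite esym.
  by apply: connect1; rewrite /e wB cB /gadj wc /finm mwc.
Qed.

Lemma small_ab (S : finType) (m : S -> S -> nat) (X : {set S}) a b :
  (forall x y, m x y = m y x) -> (forall x, m x x = 1) -> m a b = 2 ->
  (forall u, u \in X -> (u == a) || (u == b)) ->
  forall u v, u \in X -> v \in X -> m u v < 3.
Proof.
move=> ms m1 mab H u v /H /orP[]/eqP-> /H /orP[]/eqP->; by rewrite ?m1 // ?mab // ms mab.
Qed.

Lemma bwd (S : finType) (m : S -> S -> nat) (B2 : {set {set S}}) a b c d :
  coxeter_matrix m -> chordal m ->
  bad_simplex m B2 [set a; b; c] && max_irr_simplex m [set a; b; c] ->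
  m a b = 2 ->
  d \notin [set a; b; c] :|: perp m [set a; b; c] ->
  simplex m [set a; b; d] ->
  exists B, bad_separator m B2 B.
Proof.
move=> [m1 [ms mn1]] ch badmax mab dn sd.
have /andP[_ mx] := badmax.
have /andP[/andP[sA iA] _] := mx.
have ab : a != b by apply/eqP=> ab; move: mab; rewrite ab m1.
have ac : a != c.
  apply/eqP=> E; rewrite -E in iA.
  have Hs : forall u v, u \in [set a; b; a] -> v \in [set a; b; a] -> m u v < 3.
    by apply: (small_ab ms m1 mab) => u; rewrite !inE orbC orbA orbb.
  have := irr_small Hs iA (x := a) (y := b); rewrite !inE !eqxx ?orbT => /(_ isT isT) /eqP.
  by rewrite (negbTE ab).
have bc : b != c.
  apply/eqP=> E; rewrite -E in iA.
  have Hs : forall u v, u \in [set a; b; b] -> v \in [set a; b; b] -> m u v < 3.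
    by apply: (small_ab ms m1 mab) => u; rewrite !inE -orbA orbb.
  have := irr_small Hs iA (x := a) (y := b); rewrite !inE !eqxx ?orbT => /(_ isT isT) /eqP.
  by rewrite (negbTE ab).
have gsym := gadj_sym ms.
have gab : gadj m a b by rewrite /gadj ab /finm mab.
have gac : gadj m a c by rewrite /gadj ac; apply: (simp_fin sA); rewrite !inE eqxx ?orbT.
have gbc : gadj m b c by rewrite /gadj bc; apply: (simp_fin sA); rewrite !inE eqxx ?orbT.
move: dn; rewrite in_setU negb_or => /andP[dA dp].
move: dA; rewrite !inE !negb_or => /andP[/andP[da db] dc].
have gad : gadj m a d by rewrite /gadj eq_sym da; apply: (simp_fin sd); rewrite !inE eqxx ?orbT.
have gbd : gadj m b d by rewrite /gadj eq_sym db; apply: (simp_fin sd); rewrite !inE eqxx ?orbT.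
have F3 : forall s, s \notin [set a; b; c] -> gadj m a s -> gadj m b s -> gadj m c s ->
    s \notin perp m [set a; b; c] -> False.
  move=> s sn g1 g2 g3 sp; apply: (maxF ms m1 mn1 mx sn _ sp).
  move=> x; rewrite !inE => /orP[/orP[]|]/eqP->; apply: gadj_fin; by rewrite gsym.
have dnc : ~~ gadj m c d.
  apply/negP=> g3; apply: (F3 d) => //; first by rewrite !inE !negb_or da db dc.
set B0 := [set a; b] :|: perp m [set a; b; c].
have cp : c \notin perp m [set a; b; c].
  by rewrite inE; apply/negP=> /forallP /(_ c); rewrite !inE eqxx orbT m1.
have sep0 : separator m B0 c d.
  rewrite /separator /B0 !in_setU !in_set1 !negb_or (negbTE cp) (negbTE dp) (eq_sym c a) (eq_sym c b) ac bc (negbTE da) (negbTE db) /=.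
  apply/negP=> /connectP[p0 Hp0 Hl0].
  case: (shortenP Hp0) Hl0 => p Hp Up _ Hl.
  case: p Hp Up Hl => [|x q] /=; first by move=> _ _ dc'; move: dc; rewrite dc' eqxx.
  set e := (fun u v : S => [&& gadj m u v, u \notin B0 & v \notin B0]).
  move=> /andP[ecx Hq] /andP[cn Uq] Hl.
  have xB : x \notin B0 by move: ecx => /and3P[].
  have gcx : gadj m c x by move: ecx => /and3P[].
  have inC : forall w, w \in x :: q -> w \notin B0.
    by move=> w win; apply: (conn_notin (path_connect Hq win) xB).
  have Hpg : path (gadj m) x q by apply: sub_path Hq => u v /andP[].
  have Kn : forall k, k \in [:: a; b; c] -> k \notin x :: q.
    move=> k; rewrite !inE => /or3P[]/eqP -> //; apply/negP => /inC;
      by rewrite /B0 !in_setU !in_set1 eqxx ?orbT.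
  have Kc : forall k1 k2, k1 \in [:: a; b; c] -> k2 \in [:: a; b; c] -> k1 != k2 -> gadj m k1 k2.
    move=> k1 k2; rewrite !inE => /or3P[]/eqP -> /or3P[]/eqP ->; rewrite ?eqxx //= => _;
      by rewrite gsym.
  have din : d \in x :: q by rewrite Hl mem_last.
  have Ha : all (fun k => has (gadj m k) (x :: q)) [:: a; b; c].
    apply/allP => k; rewrite !inE => /or3P[]/eqP -> ; apply/hasP.
    - by exists d.
    - by exists d.
    - by exists x; rewrite ?inE ?eqxx.
  have [w win wa] := helly ms ch (leqnn (size q)) Uq Hpg Kn Kc Ha.
  move: wa => /= /and4P[gaw gbw gcw _].
  have wB := inC w win.
  move: wB; rewrite /B0 in_setU in_set2 negb_or => /andP[wab wp].
  apply: (F3 w) => //.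
  rewrite !inE negb_or wab /=.
  by apply: contraNneq cn => <-.
have [B subB msB] := minsep (leqnn _) sep0.
have /andP[sepB _] := msB.
move: (sepB) => /and3P[cB dB ncB].
have inB : forall z, gadj m c z -> gadj m z d -> z \in B.
  move=> z gcz gzd; apply/negPn/negP => zB; move: ncB => /negP; apply.
  apply: (@connect_trans _ _ z); apply: connect1; by rewrite ?gcz ?gzd ?cB ?dB ?zB.
have aB : a \in B by apply: inB; rewrite // gsym.
have bB : b \in B by apply: inB; rewrite // gsym.
exists B, a, b, c, d; split; first by split.
by split.
Qed.

Theorem lemma4p4 (S : finType) (m : S -> S -> nat) (B2 : {set {set S}}) :
  coxeter_matrix m -> chordal m -> bad_edges m B2 ->
  ((exists B : {set S}, bad_separator m B2 B) <->
   (exists a b c d : S,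
      [/\ bad_simplex m B2 [set a; b; c] && max_irr_simplex m [set a; b; c],
          m a b = 2,
          d \notin [set a; b; c] :|: perp m [set a; b; c] &
          simplex m [set a; b; d]])).
Proof.
move=> cm ch _; split.
- move=> [B [a [b [c [f [[aB bB mab cB] [bm sub fB msep]]]]]]].
  have [d dn sd] := fwd cm ch aB bB mab cB fB msep.
  by exists a, b, c, d; split.
- move=> [a [b [c [d [bm mab dn sd]]]]].
  exact: bwd cm ch bm mab dn sd.
Qed.
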